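(* Assume the setup below and let $\boldsymbol{\lambda}\in\mathcal{P}(l,n)$. Then the $J$-heart $\tau_{\mathbf{r}}(w(\boldsymbol{\lambda}))_J$ of the partition $\tau_{\mathbf{r}}(w(\boldsymbol{\lambda}))$ is the partition whose ($0$-shifted) $\beta$-number is $\chi(\tilde{\mathbf{C}}(\boldsymbol{\lambda}))$ arranged in decreasing order.
   Context: Fix positive integers $l,n$. A partition $\lambda=(\lambda_1\ge\lambda_2\ge\dots)$ has $\lambda_i=0$ for large $i$; $Y(\lambda)=\{(a,b):a\ge1,1\le b\le\lambda_a\}$; the content of $(a,b)$ is $b-a$. $\mathcal{P}(l,n)$ is the set of $l$-multipartitions $\boldsymbol{\lambda}=(\lambda^{(0)},\dots,\lambda^{(l-1)})$ of $n$. For $r\in\mathbb{Z}$, $\beta^r(\lambda)=(\lambda_i+r+1-i)_{i\ge1}$, $\beta(\lambda)=\beta^0(\lambda)$; a strictly decreasing integer sequence stabilising with respect to $r$ (i.e. $C_i=r+1-i$ for large $i$) is $\beta^r$ of a unique partition. For a strictly decreasing integer sequence $C$, $S^iC=(C_1+i,C_2+i,\dots)$. For an $l$-tuple $\mathbf{C}=(C^0,\dots,C^{l-1})$ of strictly decreasing integer sequences, $\chi(\mathbf{C})=\{l(C^q_i-1)+q+1:0\le q\le l-1,\,i\ge1\}$. A node is removable if deleting it leaves a Young diagram; for $J\subseteq\{0,\dots,l-1\}$ it is $J$-removable if removable with content congruent mod $l$ to some $j\in J$; the $J$-heart $\lambda_J$ is obtained by removing $J$-removable nodes as long as possible. Parameters: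 $H_1,\dots,H_{l-1}\in\mathbb{Q}$, $H_0=-(H_1+\dots+H_{l-1})$, $d$ a positive integer with $dH_i\in\mathbb{Z}$; $\theta=(1+H_0,H_1,\dots,H_{l-1})$. $S_l$ = permutations of $\{0,\dots,l-1\}$ generated by $s_i$ ($1\le i\le l-1$) transposing $i-1,i$, acting on $\mathbb{Q}^l$ by: $s_i\cdot\theta$ has entry $\theta_{i-1}+\theta_i$ at $i-1$, $-\theta_i$ at $i$, $\theta_i+\theta_{i+1}$ at $i+1$, otherwise unchanged (indices mod $l$). $R\subset\mathbb{Z}^l$ is generated by $\alpha_i=-e_{i-1}+2e_i-e_{i+1}$ (indices mod $l$); $\tilde{S}_l=R\rtimes S_l$ acts on $\{\theta\in\mathbb{Q}^l:\sum\theta_i=1\}$ with $R$ by translations; $\mathbb{Z}^l_0$ = integer vectors with coordinate sum $0$; $\phi(\mathbf{r})=\sum_j(r_{j-1}-r_j)e_j$ (indices mod $l$). Fix $w_\theta=\phi(\mathbf{r})w\in\tilde{S}_l$ ($\mathbf{r}\in\mathbb{Z}^l_0$, $w\in S_l$) with $\boldsymbol{\epsilon}=w_\theta\cdot\theta$ satisfying $0\le\varepsilon_i\le1$; $J=\{j:\varepsilon_j=0\}$; then $d\boldsymbol{\epsilon}\in\mathbb{Z}^l$. Let $m_i(\mathbf{c})=c_0+\dots+c_i$ and $I_t=\{p:m_p(d\boldsymbol{\epsilon})=t\}$ for $0\le t\le d$. For $\mathbf{s}\in\mathbb{Z}^l$ with $s=\sum s_i$, $\tau_{\mathbf{s}}(\boldsymbol{\lambda})$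 is the partition whose $s$-shifted $\beta$-number is $\chi(\beta^{s_0}(\lambda^{(0)}),\dots,\beta^{s_{l-1}}(\lambda^{(l-1)}))$ arranged decreasingly; $w(\boldsymbol{\lambda})$ has $p$-th component $\lambda^{(w^{-1}(p))}$. Put $C^p(\boldsymbol{\lambda})=\beta^{r_p}(\lambda^{(w^{-1}(p))})$; for $1\le t\le d-1$, $C_{[t]}=\biguplus_{p\in I_t}C^p$ (multiset union) and $C_{[0]}=C_{[d]}=\biguplus_{p\in I_0}S^{-1}C^p\uplus\biguplus_{p\in I_d}C^p$. $\tilde{\mathbf{C}}(\boldsymbol{\lambda})=(\tilde{C}^0,\dots,\tilde{C}^{l-1})$ is the unique $l$-tuple of strictly decreasing integer sequences with $\tilde{C}_{[t]}=C_{[t]}(\boldsymbol{\lambda})$ for all $0\le t\le d$ (same recipe), $\tilde{C}^p\subseteq\tilde{C}^{p-1}$ for all $0\ne p\in J$, and $S^{-1}\tilde{C}^0\subseteq\tilde{C}^{l-1}$ if $0\in I_0$. *)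

(* Defs.v *)
From HB Require Import structures.
From mathcomp Require Import all_boot all_order all_algebra.
From Stdlib Require Import ClassicalEpsilon Relation_Operators.
Set Implicit Arguments. Unset Strict Implicit. Unset Printing Implicit Defensive.
Import Order.TTheory GRing.Theory Num.Theory.
Local Open Scope ring_scope.

(* A partition is encoded by the seq of its nonzero parts, weakly decreasing.
   lambda_i (1-based) is  nth 0 lam (i-1). *)
Definition is_part (lam : seq nat) : bool :=
  sorted (fun a b : nat => (b <= a)%N) lam && (0%N \notin lam).

Definition inY (lam : seq nat) (a b : nat) : bool :=
  [&& (1 <= a)%N, (1 <= b)%N & (b <= nth 0%N lam a.-1)%N].

(* Strictly decreasing integer sequences are encoded as functions nat -> int,
   0-based: the paper's C_i is  C (i-1). *)
Definition strictly_decr (C : nat -> int) : Prop := forall k, C k.+1 < C k.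

Definition memZ (C : nat -> int) (x : int) : Prop := exists k, C k = x.
Definition membZ (C : nat -> int) (x : int) : bool :=
  if excluded_middle_informative (memZ C x) then true else false.

(* beta^r(lambda) = (lambda_i + r + 1 - i)_{i>=1}, 0-based. *)
Definition betar (r : int) (lam : seq nat) : nat -> int :=
  fun k => (nth 0%N lam k)%:Z + r - k%:Z.

(* The (r-shifted) beta-number of nu, arranged decreasingly, equals a given
   set S iff the set of its terms is S (beta^r(nu) is strictly decreasing). *)
Definition beta_set (r : int) (nu : seq nat) (x : int) : Prop :=
  memZ (betar r nu) x.

Definition chi (l : nat) (C : 'I_l -> nat -> int) (x : int) : Prop :=
  exists (q : 'I_l) (k : nat), x = l%:Z * (C q k - 1) + q%:Z + 1.

Definition content_in (l : nat) (J : pred 'I_l) (a b : nat) : Prop :=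
  exists j : 'I_l, J j /\ (l%:Z %| (b%:Z - a%:Z - j%:Z))%Z.

Definition J_step (l : nat) (J : pred 'I_l) (lam mu : seq nat) : Prop :=
  is_part mu /\
  exists a b, inY lam a b /\ content_in J a b /\
    (forall a' b', inY mu a' b' <-> (inY lam a' b' /\ (a', b') <> (a, b))).

Definition is_J_heart (l : nat) (J : pred 'I_l) (lam mu : seq nat) : Prop :=
  clos_refl_trans (seq nat) (J_step J) lam mu /\ ~ (exists nu, J_step J mu nu).

(* alpha_i = -e_{i-1} + 2 e_i - e_{i+1}, indices mod l (entries added). *)
Definition alpha (l : nat) (i : 'I_l) : 'I_l -> int :=
  fun j => 2%:Z * (j == i)%:Z - (j == ord_pred i)%:Z - (j == ordS i)%:Z.

(* s_i . theta = theta - theta_i alpha_i  (this is the stated formula: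
   -theta_i at i, theta_{i-1}+theta_i at i-1, theta_i+theta_{i+1} at i+1). *)
Definition sact (l : nat) (i : 'I_l) (th : 'I_l -> rat) : 'I_l -> rat :=
  fun j => th j - th i * (alpha i j)%:~R.

(* An element w of S_l is given by a word ws = [i1; ...; ik] in the
   generators s_i (1 <= i <= l-1): w = s_{i1} ... s_{ik}. *)
Definition word_act (l : nat) (ws : seq 'I_l) (th : 'I_l -> rat) :=
  foldr (@sact l) th ws.

Definition transp (l : nat) (i q : 'I_l) : 'I_l :=
  if q == i then ord_pred i else if q == ord_pred i then i else q.

(* w^{-1}(p) = s_{ik} ( ... (s_{i1} p)). *)
Definition word_inv (l : nat) (ws : seq 'I_l) (p : 'I_l) : 'I_l :=
  foldl (fun q i => transp i q) p ws.

Definition phi (l : nat) (r : 'I_l -> int) : 'I_l -> int :=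
  fun j => r (ord_pred j) - r j.

Definition theta (l : nat) (H : 'I_l -> rat) : 'I_l -> rat :=
  fun j => if (j == 0 :> nat) then 1 + H j else H j.

(* epsilon = w_theta . theta = phi(r) + w . theta. *)
Definition eps (l : nat) (H : 'I_l -> rat) (r : 'I_l -> int) (ws : seq 'I_l)
  : 'I_l -> rat :=
  fun j => word_act ws (theta H) j + (phi r j)%:~R.

Definition mpart (l d : nat) (e : 'I_l -> rat) (p : 'I_l) : rat :=
  \sum_(i : 'I_l | (i <= p)%N) d%:R * e i.

(* Multiplicity of x in C_[t] (same recipe for any l-tuple C). *)
Definition multC (l d : nat) (e : 'I_l -> rat) (C : 'I_l -> nat -> int)
  (t : nat) (x : int) : nat :=
  if (0 < t < d)%N then
    (\sum_(p : 'I_l | mpart d e p == (t%:R : rat)) membZ (C p) x)%N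
  else
    (\sum_(p : 'I_l | mpart d e p == (0 : rat)) membZ (C p) (x + 1) +
     \sum_(p : 'I_l | mpart d e p == (d%:R : rat)) membZ (C p) x)%N.

Definition Cseq (l : nat) (r : 'I_l -> int) (ws : seq 'I_l)
  (lam : 'I_l -> seq nat) : 'I_l -> nat -> int :=
  fun p => betar (r p) (lam (word_inv ws p)).

Definition Ctilde_spec (l d : nat) (e : 'I_l -> rat) (C Ct : 'I_l -> nat -> int)
  : Prop :=
  (forall q, strictly_decr (Ct q)) /\
  (forall t, (t <= d)%N -> forall x, multC d e Ct t x = multC d e C t x) /\
  (forall p : 'I_l, (p != 0 :> nat) -> e p = 0 ->
     forall x, memZ (Ct p) x -> memZ (Ct (ord_pred p)) x) /\
  (forall p0 q : 'I_l, (p0 == 0 :> nat) -> (q == l.-1 :> nat) ->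
     mpart d e p0 = 0 ->
     forall x, memZ (Ct p0) (x + 1) -> memZ (Ct q) x).

(* Main.v *)
Require Import Defs.
From HB Require Import structures.
From mathcomp Require Import all_boot all_order all_algebra.
From Stdlib Require Import ClassicalEpsilon Relation_Operators Operators_Properties.
Set Implicit Arguments. Unset Strict Implicit. Unset Printing Implicit Defensive.
Import Order.TTheory GRing.Theory Num.Theory.
Local Open Scope ring_scope.
Definition enc (m : nat) (q : 'I_m.+1) (c : int) : int :=
  m.+1%:Z * (c - 1) + q%:Z + 1.

Definition res (m : nat) (y : int) : 'I_m.+1 := inord `|(y %% m.+1%:Z)%Z|%N.

Lemma res_val m (y : int) : ((res m y : nat)%:Z = (y %% m.+1%:Z)%Z).
Proof.
rewrite /res inordK; last first.
  rewrite -ltz_nat gez0_abs ?modz_ge0 //.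
  by rewrite ltz_pmod.
by rewrite gez0_abs ?modz_ge0.
Qed.

Lemma res_enc m q c : res m (enc q c - 1) = q.
Proof.
apply/val_inj; apply/eqP; rewrite -eqz_nat res_val /enc.
rewrite addrK mulrC modzMDl modz_small //.
by rewrite lez_nat ltz_nat /= ltn_ord.
Qed.

Lemma res_enc1 m q c : res m (enc q c + (-1)) = q.
Proof. exact: res_enc. Qed.

Lemma enc_inj m q q' c c' : enc q c = enc (m:=m) q' c' -> q = q' /\ c = c'.
Proof.
move=> E; have Eq : q = q' by rewrite -(res_enc q c) -(res_enc q' c') E.
split=> //; subst q'.
move: E; rewrite /enc => /addIr /addIr /mulfI => H.
by apply: (addIr (-1)); apply: H.
Qed.

Lemma enc_surj m (x : int) : x = enc (res m (x - 1)) (((x - 1) %/ m.+1%:Z)%Z + 1).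
Proof.
rewrite /enc res_val addrK mulrC -divz_eq.
by rewrite subrK.
Qed.
Lemma sum_ind n (a : 'I_n) : \sum_(j : 'I_n) ((j == a)%:Z : int) = 1.
Proof.
rewrite (bigD1 a) //= eqxx big1 ?addr0 // => j /negbTE -> //.
Qed.

Lemma sum_alpha m (i : 'I_m.+1) : \sum_j ((alpha i j)%:~R : rat) = 0.
Proof.
rewrite -rmorph_sum /alpha !sumrB -mulr_sumr !sum_ind.
by [].
Qed.

Lemma sum_sact m (i : 'I_m.+1) th : \sum_j sact i th j = \sum_j th j.
Proof.
by rewrite /sact sumrB -mulr_sumr sum_alpha mulr0 subr0.
Qed.

Lemma sum_word m (ws : seq 'I_m.+1) th : \sum_j word_act ws th j = \sum_j th j.
Proof.
elim: ws => [|i ws IH] //=.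
by rewrite sum_sact.
Qed.

Lemma sum_phi m (r : 'I_m.+1 -> int) : \sum_j phi r j = 0.
Proof.
rewrite /phi sumrB.
rewrite [X in X - _](reindex_inj (@ordS_inj m.+1)) /=.
by rewrite (eq_bigr r) ?subrr // => i _; rewrite ordSK.
Qed.

Lemma sum_theta m (H : 'I_m.+1 -> rat) : \sum_j H j = 0 -> \sum_j theta H j = 1.
Proof.
move=> h0.
rewrite (bigD1 ord0) //= /theta /= -addrA.
rewrite (eq_bigr H); last by move=> j; rewrite -val_eqE /= => /negbTE ->.
by move: h0; rewrite (bigD1 ord0) //= => ->; rewrite addr0.
Qed.

Lemma sum_eps m (H : 'I_m.+1 -> rat) r ws : \sum_j H j = 0 ->
  \sum_j eps H r ws j = 1.
Proof.
move=> h0; rewrite /eps big_split /= sum_word sum_theta //.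
by rewrite -rmorph_sum sum_phi addr0.
Qed.

Lemma int_theta m (H : 'I_m.+1 -> rat) (d : nat) : \sum_j H j = 0 ->
  (forall i : 'I_m.+1, (i != 0 :> nat) -> exists z : int, d%:R * H i = z%:~R) ->
  forall j, d%:R * theta H j \is a Num.int.
Proof.
move=> h0 hd j.
have hi : forall i : 'I_m.+1, (i != 0 :> nat) -> d%:R * H i \is a Num.int.
  by move=> i /hd [z ->]; apply/intrP; exists z.
rewrite /theta; case: ifP => [j0|/negbT]; last exact: hi.
have -> : H j = - \sum_(i | i != j) H i.
  by move: h0; rewrite (bigD1 j) //= => /eqP; rewrite addr_eq0 => /eqP.
rewrite mulrDr mulr1 rpredD ?rpred_nat // mulrN rpredN mulr_sumr rpred_sum //.
move=> i hij; apply: hi; apply: contra hij => /eqP hi0.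
by apply/eqP/val_inj; rewrite /= hi0 (eqP j0).
Qed.

Lemma int_sact m (i : 'I_m.+1) th (d : nat) :
  (forall j, d%:R * th j \is a Num.int) ->
  forall j, d%:R * sact i th j \is a Num.int.
Proof.
move=> h j; rewrite /sact mulrBr rpredB // mulrA rpredM // rpred_int //.
Qed.

Lemma int_eps m (H : 'I_m.+1 -> rat) r ws (d : nat) : \sum_j H j = 0 ->
  (forall i : 'I_m.+1, (i != 0 :> nat) -> exists z : int, d%:R * H i = z%:~R) ->
  forall j, d%:R * eps H r ws j \is a Num.int.
Proof.
move=> h0 hd j; rewrite /eps mulrDr rpredD //; last first.
  by rewrite rpredM ?rpred_nat ?rpred_int.
move: j; elim: ws => [|i ws IH] /=; first exact: int_theta.
exact: int_sact.
Qed.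
Lemma ord_pred_val n (i : 'I_n.+1) :
  (ord_pred i : nat) = if (i : nat) == 0%N then n else (i : nat).-1.
Proof.
rewrite /= ; case: i => [[|i] hi] /=.
  by rewrite modn_small.
by rewrite modnDr modn_small // ltnW.
Qed.

Lemma iter_pred_val n (i : 'I_n.+1) k : (k <= i)%N ->
  (iter k (@ord_pred _) i : nat) = (i - k)%N.
Proof.
elim: k => [|k IH] hk; first by rewrite subn0.
rewrite iterS ord_pred_val IH ?(ltnW hk) //.
have -> : (i - k == 0)%N = false by rewrite subn_eq0 leqNgt hk.
by rewrite subnS.
Qed.

Lemma mpartE m d (e : 'I_m.+1 -> rat) (p : 'I_m.+1) :
  mpart d e p = \sum_(0 <= k < p.+1) d%:R * e (inord k).
Proof.
rewrite /mpart (eq_bigr (fun i : 'I_m.+1 => d%:R * e (inord i))); last first.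
  by move=> i _; rewrite inord_val.
rewrite -(big_mkord (fun i => i <= p)%N (fun i => d%:R * e (inord i))).
rewrite (big_nat_widen 0 p.+1 m.+1) //.
Qed.

Definition segsum m d (e : 'I_m.+1 -> rat) (n : nat) :=
  \sum_(0 <= k < n) d%:R * e (inord k).

Lemma segsum_split m d e n1 n2 : (n1 <= n2)%N ->
  segsum d e n2 = segsum (m:=m) d e n1 + \sum_(n1 <= k < n2) d%:R * e (inord k).
Proof. by move=> h; rewrite /segsum (big_cat_nat (leq0n n1) h). Qed.

Lemma segsum_zero m d (e : 'I_m.+1 -> rat) n1 n2 : (0 < d)%N ->
  (forall j, 0 <= e j) -> (n1 <= n2)%N ->
  segsum d e n1 = segsum d e n2 ->
  forall k, (n1 <= k < n2)%N -> e (inord k) = 0.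
Proof.
move=> hd he h12; rewrite (segsum_split d e h12) => /eqP.
rewrite addrC -subr_eq subrr eq_sym => /eqP.
rewrite big_nat => /eqP; rewrite psumr_eq0 => [/allP H k hk|k _]; last first.
  by rewrite mulr_ge0 ?ler0n.
have : k \in index_iota n1 n2 by rewrite mem_index_iota.
move=> /H /= /implyP; rewrite hk => /(_ isT) /eqP /eqP.
rewrite mulf_eq0 pnatr_eq0 => /orP [/eqP d0|/eqP //]; by rewrite d0 in hd.
Qed.

Lemma segsum_mono m d (e : 'I_m.+1 -> rat) n1 n2 :
  (forall j, 0 <= e j) -> (n1 <= n2)%N -> segsum d e n1 <= segsum d e n2.
Proof.
move=> he h; rewrite (segsum_split d e h) lerDl sumr_ge0 // => k _.
by rewrite mulr_ge0 ?ler0n.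
Qed.

Lemma segsum_full m d (e : 'I_m.+1 -> rat) :
  \sum_j e j = 1 -> segsum d e m.+1 = d%:R.
Proof.
move=> hs; rewrite /segsum big_mkord -mulr_sumr.
rewrite (eq_bigr e) ?hs ?mulr1 // => i _; by rewrite inord_val.
Qed.

Definition sh m d (e : 'I_m.+1 -> rat) (p : 'I_m.+1) : int :=
  (mpart d e p == 0)%:Z.
Definition key m d (e : 'I_m.+1 -> rat) (p : 'I_m.+1) : rat :=
  if mpart d e p == 0 then d%:R else mpart d e p.

Lemma mpart_pred m d (e : 'I_m.+1 -> rat) (p : 'I_m.+1) : (p != 0 :> nat) ->
  mpart d e p = mpart d e (ord_pred p) + d%:R * e p.
Proof.
move=> hp; rewrite !mpartE ord_pred_val (negbTE hp).
rewrite big_nat_recr //= inord_val; congr (_ + _).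
by case: (val p) hp.
Qed.

Lemma mpart_zero m d (e : 'I_m.+1 -> rat) (p : 'I_m.+1) : (p == 0 :> nat) ->
  mpart d e p = d%:R * e p.
Proof.
move=> hp; rewrite mpartE (eqP hp) big_nat1.
by congr (_ * e _); apply: val_inj; rewrite /= inordK // (eqP hp).
Qed.

Lemma mpart_max m d (e : 'I_m.+1 -> rat) (p : 'I_m.+1) : (p == m :> nat) ->
  \sum_j e j = 1 -> mpart d e p = d%:R.
Proof.
by move=> hp hs; rewrite mpartE (eqP hp); apply: segsum_full.
Qed.
Definition good m d (e : 'I_m.+1 -> rat) :=
  [/\ (0 < d)%N, (forall j, 0 <= e j), \sum_j e j = 1 &
      (forall j, d%:R * e j \is a Num.int)].

Lemma mpart_seg m d (e : 'I_m.+1 -> rat) p : mpart d e p = segsum d e p.+1.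
Proof. by rewrite mpartE. Qed.

Lemma mpart_mono m d (e : 'I_m.+1 -> rat) (p p' : 'I_m.+1) : good d e ->
  (p <= p')%N -> mpart d e p <= mpart d e p'.
Proof. by case=> _ he _ _ h; rewrite !mpart_seg segsum_mono. Qed.

Lemma mpart_ge0 m d (e : 'I_m.+1 -> rat) p : good d e -> 0 <= mpart d e p.
Proof.
case=> _ he _ _; rewrite mpart_seg /segsum sumr_ge0 // => k _.
by rewrite mulr_ge0 ?ler0n.
Qed.

Lemma mpart_led m d (e : 'I_m.+1 -> rat) p : good d e -> mpart d e p <= d%:R.
Proof.
by case=> hd he hs hi; rewrite mpart_seg -(segsum_full d hs) segsum_mono.
Qed.

Lemma mpart_nat m d (e : 'I_m.+1 -> rat) p : good d e ->
  exists t, (t <= d)%N /\ mpart d e p = t%:R.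
Proof.
move=> g; have := mpart_ge0 p g; have := mpart_led p g.
case: g => hd he hs hi.
have hint : mpart d e p \is a Num.int by rewrite /mpart rpred_sum.
move=> hle hge.
have : mpart d e p \is a Num.nat by rewrite natrEint hint hge.
move=> /natrP [t ht]; exists t; split=> //.
by rewrite -(ler_nat rat) -ht.
Qed.

Lemma d_neq0 m d (e : 'I_m.+1 -> rat) : good d e -> (d%:R : rat) != 0.
Proof. by case=> hd _ _ _; rewrite pnatr_eq0 -lt0n. Qed.

Lemma key_pred m d (e : 'I_m.+1 -> rat) p : good d e -> e p = 0 ->
  key d e (ord_pred p) = key d e p.
Proof.
move=> g ep; have gg := g; case: gg => hd he hs hi.
case: (boolP (p == 0 :> nat)) => hp.
  rewrite /key (mpart_zero d e hp) ep mulr0 eqxx.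
  rewrite (mpart_max d (e:=e) _ hs); last by rewrite ord_pred_val hp.
  by rewrite (negbTE (d_neq0 g)).
by rewrite /key (mpart_pred d e hp) ep mulr0 addr0.
Qed.

Lemma sh_pred m d (e : 'I_m.+1 -> rat) p : e p = 0 -> (p != 0 :> nat) ->
  sh d e (ord_pred p) = sh d e p.
Proof. by move=> ep hp; rewrite /sh (mpart_pred d e hp) ep mulr0 addr0. Qed.

Lemma sh_zero m d (e : 'I_m.+1 -> rat) p : good d e -> e p = 0 -> (p == 0 :> nat) ->
  sh d e p = 1 /\ sh d e (ord_pred p) = 0.
Proof.
move=> g ep hp; have gg := g; case: gg => hd he hs hi.
rewrite /sh (mpart_zero d e hp) ep mulr0 eqxx.
rewrite (mpart_max d (e:=e) _ hs); last by rewrite ord_pred_val hp.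
by rewrite (negbTE (d_neq0 g)).
Qed.

Lemma enc_pred m d (e : 'I_m.+1 -> rat) q y : good d e -> e q = 0 ->
  enc q (y + sh d e q) - 1 = enc (ord_pred q) (y + sh d e (ord_pred q)).
Proof.
move=> g eq0.
case: (boolP (q == 0 :> nat)) => hq.
  have [-> ->] := sh_zero g eq0 hq.
  rewrite /enc ord_pred_val hq (eqP hq) addr0 addrK addr0 addrK.
  have -> : (m.+1 : int) = m%:Z + 1 by rewrite -[m.+1]addn1 PoszD.
  by rewrite mulrBr mulr1 -addrA subrK.
rewrite (sh_pred d eq0 hq) /enc ord_pred_val (negbTE hq) addrK.
rewrite -[RHS]addrA; congr (_ + _); case: (nat_of_ord q) hq => // k _ /=.
by rewrite -[k.+1]addn1 PoszD.
Qed.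

Definition reach m (e : 'I_m.+1 -> rat) (p p' : 'I_m.+1) :=
  exists n, iter n (@ord_pred _) p = p' /\
    forall i, (i < n)%N -> e (iter i (@ord_pred _) p) = 0.

Lemma reach_refl m (e : 'I_m.+1 -> rat) p : reach e p p.
Proof. by exists 0%N. Qed.

Lemma reach_trans m (e : 'I_m.+1 -> rat) p1 p2 p3 :
  reach e p1 p2 -> reach e p2 p3 -> reach e p1 p3.
Proof.
move=> [n1 [h1 h1']] [n2 [h2 h2']]; exists (n2 + n1)%N; split.
  by rewrite iterD h1.
move=> i hi; case: (ltnP i n1) => hin; first exact: h1'.
rewrite -(subnK hin) iterD h1 h2' //.
by rewrite ltn_subLR // addnC.
Qed.

Lemma reach_step m (e : 'I_m.+1 -> rat) p : e p = 0 -> reach e p (ord_pred p).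
Proof. by move=> h; exists 1%N; split=> // -[|] //. Qed.

Lemma reach_down m (e : 'I_m.+1 -> rat) (p p' : 'I_m.+1) :
  (p' <= p)%N -> (forall k, (p' < k <= p)%N -> e (inord k) = 0) -> reach e p p'.
Proof.
move=> hle hz; exists (p - p')%N; split.
  by apply: ord_inj; rewrite iter_pred_val ?leq_subr // subKn.
move=> i hi; have hip : (i <= p)%N.
  by apply: leq_trans (ltnW hi) (leq_subr _ _).
have -> : iter i (@ord_pred _) p = inord (p - i).
  by apply: ord_inj; rewrite iter_pred_val // inordK // ltnS (leq_trans (leq_subr _ _)) // -ltnS.
apply: hz; rewrite leq_subr andbT.
by rewrite ltn_subRL addnC -ltn_subRL.
Qed.

Lemma chain m d (e : 'I_m.+1 -> rat) (p p' : 'I_m.+1) : good d e ->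
  key d e p = key d e p' -> reach e p p' \/ reach e p' p.
Proof.
move=> g; wlog hpp : p p' / (p <= p')%N.
  move=> W hk; case: (leqP p p') => h; first exact: W.
  by case: (W p' p (ltnW h) (esym hk)) => ?; [right|left].
have gg := g; case: gg => hd he hs hi.
move=> hk.
case E: (mpart d e p == mpart d e p').
  right; apply: reach_down => // k /andP [hk1 hk2].
  apply: (segsum_zero (m:=m) hd he (n1:=p.+1) (n2:=p'.+1)) => //.
    by rewrite -!mpart_seg (eqP E).
  by rewrite hk1 ltnS.
have [h0 hd'] : mpart d e p = 0 /\ mpart d e p' = d%:R.
  move: hk; rewrite /key.
  case: (boolP (mpart d e p == 0)) => h1; case: (boolP (mpart d e p' == 0)) => h2.
  - by rewrite (eqP h1) (eqP h2) eqxx in E.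
  - by move=> ->; rewrite (eqP h1).
  - move=> hh; have := mpart_mono g hpp; rewrite (eqP h2) hh.
    by rewrite leNgt ltr0n hd.
  - by move=> hh; rewrite hh eqxx in E.
left.
have z1 : forall k, (k < p.+1)%N -> e (inord k) = 0.
  move=> k hk'; apply: (segsum_zero (m:=m) hd he (n1:=0) (n2:=p.+1)) => //.
  by rewrite -mpart_seg h0 /segsum big_geq.
have z2 : forall k, (p'.+1 <= k < m.+1)%N -> e (inord k) = 0.
  move=> k hk'; apply: (segsum_zero (m:=m) hd he (n1:=p'.+1) (n2:=m.+1)) => //.
    by rewrite -mpart_seg hd' segsum_full.
have hzero : reach e p ord0.
  apply: reach_down => // k /andP [_ hk']; apply: z1; by rewrite ltnS.
have hwrap : reach e ord0 ord_max.
  have -> : (ord_max : 'I_m.+1) = ord_pred ord0.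
    by apply: ord_inj; rewrite ord_pred_val.
  apply: reach_step; have := z1 0%N (ltn0Sn _).
  by have -> : (inord 0 : 'I_m.+1) = ord0 by apply: val_inj; rewrite /= inordK.
apply: (reach_trans hzero); apply: (reach_trans hwrap).
apply: reach_down; first by rewrite /= -ltnS.
move=> k /andP [hk1 hk2]; apply: z2; by rewrite hk1 ltnS.
Qed.
Definition bP (P : Prop) : bool :=
  if excluded_middle_informative P then true else false.

Lemma bPP (P : Prop) : reflect P (bP P).
Proof. by rewrite /bP; case: excluded_middle_informative => h; constructor. Qed.

Lemma bP_iff (P Q : Prop) : (P <-> Q) -> bP P = bP Q.
Proof. by move=> h; apply/bPP/bPP => /h. Qed.

Lemma membZE C x : membZ C x = bP (memZ C x).
Proof. by []. Qed.

Lemma reach_closed m (e : 'I_m.+1 -> rat) (A : 'I_m.+1 -> int -> Prop) y :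
  (forall p, e p = 0 -> A p y -> A (ord_pred p) y) ->
  forall p p', reach e p p' -> A p y -> A p' y.
Proof.
move=> hn p p' [n [<- hz]]; elim: n hz => [|n IH] hz // hA.
rewrite iterS; apply: hn; first exact: hz.
by apply: IH => // i hi; apply: hz; apply: ltnW.
Qed.

Lemma card_sum (T : finType) (K : pred T) (P : T -> Prop) :
  #|[set x | K x && bP (P x)]| = (\sum_(x | K x) (bP (P x) : nat))%N.
Proof.
rewrite -sum1_card big_mkcond [RHS]big_mkcond /=; apply: eq_bigr => x _.
rewrite inE; by case: (K x); case: (bP (P x)).
Qed.

Lemma uniq_G m d (e : 'I_m.+1 -> rat) (A B : 'I_m.+1 -> int -> Prop) : good d e ->
  (forall p y, e p = 0 -> A p y -> A (ord_pred p) y) ->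
  (forall p y, e p = 0 -> B p y -> B (ord_pred p) y) ->
  (forall p y, (\sum_(p' | key d e p' == key d e p) (bP (A p' y) : nat) =
                \sum_(p' | key d e p' == key d e p) (bP (B p' y) : nat))%N) ->
  forall p y, A p y <-> B p y.
Proof.
move=> g hA hB hc p y.
pose SA := [set x | (key d e x == key d e p) && bP (A x y)].
pose SB := [set x | (key d e x == key d e p) && bP (B x y)].
have hcard : #|SA| = #|SB| by rewrite /SA /SB !card_sum hc.
have clA := reach_closed (hA ^~ y); have clB := reach_closed (hB ^~ y).
have hsub : SA \subset SB \/ SB \subset SA.
  case: (boolP (SA \subset SB)) => h; [by left|right].
  move: h => /subsetPn [a ha hna]; apply/subsetP => b hb.
  case: (boolP (b \in SA)) => // hnb.
  move: ha hna hb hnb; rewrite !inE => /andP [ka /bPP Aa] hna /andP [kb /bPP Bb] hnb.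
  have : key d e a = key d e b by rewrite (eqP ka) (eqP kb).
  case/(chain g) => hr.
  - by rewrite kb (introT (bPP _) (clA _ _ hr Aa)) in hnb.
  - by rewrite ka (introT (bPP _) (clB _ _ hr Bb)) in hna.
have hEq : SA = SB.
  case: hsub => h.
    by apply/eqP; rewrite eqEcard h hcard leqnn.
  by apply/esym/eqP; rewrite eqEcard h hcard leqnn.
have hh : (p \in SA) = (p \in SB) by rewrite hEq.
move: hh; rewrite !inE eqxx /= => hh.
by split=> h; apply/bPP; [rewrite -hh|rewrite hh]; apply/bPP.
Qed.
Definition GS m d (e : 'I_m.+1 -> rat) (S : 'I_m.+1 -> int -> Prop) p y :=
  S p (y + sh d e p).
Definition MS m d (e : 'I_m.+1 -> rat) (S : 'I_m.+1 -> int -> Prop) k y : nat :=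
  (\sum_(p | key d e p == k) (bP (GS d e S p y) : nat))%N.
Definition runners m (X : int -> Prop) (p : 'I_m.+1) c := X (enc p c).

Definition move m (e : 'I_m.+1 -> rat) (X X' : int -> Prop) :=
  exists x, X x /\ ~ X (x - 1) /\ e (res m (x - 1)) = 0 /\
    (forall z, X' z <-> (X z /\ z <> x) \/ z = x - 1).

Definition term m (e : 'I_m.+1 -> rat) (X : int -> Prop) :=
  ~ exists x, X x /\ ~ X (x - 1) /\ e (res m (x - 1)) = 0.

Lemma encG_inj m d (e : 'I_m.+1 -> rat) p p' y y' :
  enc p (y + sh d e p) = enc p' (y' + sh d e p') -> p = p' /\ y = y'.
Proof.
move=> /enc_inj [hp hc]; subst p'; split=> //.
by move: hc => /addIr.
Qed.

Lemma move_G m d (e : 'I_m.+1 -> rat) X X' : good d e -> move e X X' ->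
  exists q y0, [/\ e q = 0, GS d e (runners X) q y0,
    ~ GS d e (runners X) (ord_pred q) y0 &
    forall p y, GS d e (runners X') p y <->
      (GS d e (runners X) p y /\ (p, y) <> (q, y0)) \/ (p, y) = (ord_pred q, y0)].
Proof.
move=> g [x [hx [hnx [hres hX']]]].
set q := res m (x - 1).
set y0 := (((x - 1) %/ m.+1%:Z)%Z + 1) - sh d e q.
have ex : x = enc q (y0 + sh d e q) by rewrite /y0 subrK {1}(enc_surj m x).
have ex1 : x - 1 = enc (ord_pred q) (y0 + sh d e (ord_pred q)).
  by rewrite -enc_pred // -ex.
exists q, y0; split=> //.
- by rewrite /GS /runners -ex.
- by rewrite /GS /runners -ex1.
move=> p y; rewrite /GS /runners hX'; split.
- case=> [[h1 h2]|h].
    left; split=> // -[hp hy]; apply: h2; by rewrite ex hp hy.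
  by right; rewrite ex1 in h; case: (encG_inj h) => -> ->.
- case=> [[h1 h2]|[-> ->]].
    left; split=> // h; apply: h2; rewrite ex in h.
    by case: (encG_inj h) => -> ->.
  by right.
Qed.

Lemma MS_move m d (e : 'I_m.+1 -> rat) X X' : good d e -> move e X X' ->
  forall k y, MS d e (runners X') k y = MS d e (runners X) k y.
Proof.
move=> g hm k y; have [q [y0 [eq0 hq hnq hG]]] := move_G g hm.
have hqq : ord_pred q != q.
  by apply/eqP => hh; rewrite hh in hnq.
have same : forall p, p != q -> p != ord_pred q ->
  bP (GS d e (runners X') p y) = bP (GS d e (runners X) p y).
  move=> p h1 h2; apply: bP_iff; rewrite hG; split.
    by case=> [[]|[hp _]] //; rewrite hp eqxx in h2.
  by move=> h; left; split=> // -[hp _]; rewrite hp eqxx in h1.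
case: (eqVneq y y0) => hy; last first.
  rewrite /MS; apply: eq_bigr => p _; congr (nat_of_bool _); apply: bP_iff; rewrite hG; split.
    by case=> [[]|[_ hh]] //; rewrite hh eqxx in hy.
  by move=> h; left; split=> // -[_ hh]; rewrite hh eqxx in hy.
subst y0.
case: (eqVneq k (key d e q)) => hk; last first.
  rewrite /MS; apply: eq_bigr => p /eqP hp; congr (nat_of_bool _); apply: same.
    by apply: contra_neq hk => hpq; rewrite -hp hpq.
  by apply: contra_neq hk => hpq; rewrite -hp hpq key_pred.
rewrite /MS (bigD1 q) ?hk //= [RHS](bigD1 q) ?hk //=.
rewrite (bigD1 (ord_pred q)) /=; last by rewrite key_pred ?hk ?eqxx.
rewrite [in RHS](bigD1 (ord_pred q)) /=; last by rewrite key_pred ?hk ?eqxx.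
have -> : bP (GS d e (runners X') q y) = false.
  apply/bPP; rewrite hG; move=> [[_ hne]|hh]; first exact: (hne erefl).
  by case: hh => hh; rewrite -hh eqxx in hqq.
have -> : bP (GS d e (runners X') (ord_pred q) y) = true.
  by apply/bPP; rewrite hG; right.
have -> : bP (GS d e (runners X) q y) = true by apply/bPP.
have -> : bP (GS d e (runners X) (ord_pred q) y) = false by apply/bPP.
rewrite /= add0n add1n add0n; congr (_.+1); apply: eq_bigr => p /andP [/andP [_ h1] h2].
by congr (nat_of_bool _); apply: same.
Qed.

Lemma term_G m d (e : 'I_m.+1 -> rat) X : good d e -> term e X ->
  forall p y, e p = 0 -> GS d e (runners X) p y -> GS d e (runners X) (ord_pred p) y.
Proof.
move=> g ht p y ep hG; rewrite /GS /runners -enc_pred //.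
case: (excluded_middle_informative (X (enc p (y + sh d e p) - 1))) => // hn.
exfalso; apply: ht; exists (enc p (y + sh d e p)); split=> //; split=> //.
by rewrite res_enc.
Qed.

Lemma key_nat m d (e : 'I_m.+1 -> rat) p : good d e ->
  exists t, (t <= d)%N /\ key d e p = (if t == 0%N then d else t)%:R.
Proof.
move=> g; have [t [ht hm]] := mpart_nat p g; exists t; split=> //.
rewrite /key hm pnatr_eq0; by case: (t == 0%N).
Qed.

Lemma multC_MS m d (e : 'I_m.+1 -> rat) C t y : good d e -> (t <= d)%N ->
  multC d e C t y = MS d e (fun p z => memZ (C p) z) (if t == 0%N then d else t)%:R y.
Proof.
move=> g htd; have dn0 := d_neq0 g; rewrite /multC /MS /GS.
case: ifP => ht.
  have [t0 td] : (t != 0)%N /\ (t < d)%N by case/andP: ht => h1 h2; rewrite -lt0n h1 h2.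
  rewrite (negbTE t0).
  apply: eq_big => [p|p /eqP hp].
    rewrite /key; case: (boolP (mpart d e p == 0)) => h0.
      rewrite (eqP h0) eq_sym pnatr_eq0 (negbTE t0) /=.
      by rewrite eqr_nat; apply/esym/negbTE; rewrite neq_ltn td orbT.
    by [].
  rewrite /sh hp pnatr_eq0 (negbTE t0) addr0; by [].
have hk : (if t == 0%N then d else t) = d.
  case: ifP => // t0; apply/eqP; rewrite eqn_leq htd /=.
  by move: ht; rewrite lt0n t0 /= => /negbT; rewrite -leqNgt.
rewrite hk [RHS](bigID (fun p => mpart d e p == 0)) /=; congr (_ + _)%N.
  apply: eq_big => [p|p /eqP hp].
    rewrite /key; case: (boolP (mpart d e p == 0)) => h0; first by rewrite eqxx.
    by rewrite andbF.
  by rewrite /sh hp eqxx.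
apply: eq_big => [p|p /eqP hp].
  rewrite /key; case: (boolP (mpart d e p == 0)) => h0 /=.
    by rewrite (eqP h0) andbF eq_sym (negbTE dn0).
  by rewrite andbT.
by rewrite /sh hp (negbTE dn0) addr0.
Qed.

Lemma MS_of_multC m d (e : 'I_m.+1 -> rat) C1 C2 : good d e ->
  (forall t, (t <= d)%N -> forall x, multC d e C1 t x = multC d e C2 t x) ->
  forall p y, MS d e (fun p z => memZ (C1 p) z) (key d e p) y =
              MS d e (fun p z => memZ (C2 p) z) (key d e p) y.
Proof.
move=> g h p y; have [t [ht ->]] := key_nat p g.
by rewrite -!multC_MS // h.
Qed.
Definition geqr : rel nat := fun a b => (b <= a)%N.

Lemma part_decr lam : is_part lam -> forall i j, (i <= j)%N ->
  (nth 0%N lam j <= nth 0%N lam i)%N.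
Proof.
case/andP => hs _ i j hij.
case: (ltnP j (size lam)) => hj; last by rewrite nth_default.
have hi : (i < size lam)%N by apply: leq_ltn_trans hj.
have tr : transitive geqr by move=> a b c h1 h2; apply: leq_trans h2 h1.
have rf : reflexive geqr by move=> a; apply: leqnn.
exact: (sorted_leq_nth tr rf 0%N hs).
Qed.

Lemma part_nth0 lam k : is_part lam -> (0 < nth 0%N lam k)%N = (k < size lam)%N.
Proof.
case/andP => _ h0; case: (ltnP k (size lam)) => hk; last by rewrite nth_default.
rewrite lt0n; apply/eqP => hz; move: h0; rewrite -hz mem_nth //.
Qed.

Definition Bp (lam : seq nat) (x : int) := memZ (betar 0 lam) x.

Lemma betar0 lam k : betar 0 lam k = (nth 0%N lam k)%:Z - k%:Z.
Proof. by rewrite /betar addr0. Qed.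

Lemma beta_strict lam : is_part lam -> forall i j, (i < j)%N ->
  betar 0 lam j < betar 0 lam i.
Proof.
move=> hp i j hij; rewrite !betar0.
have h1 := part_decr hp (ltnW hij).
apply: (le_lt_trans (y := (nth 0%N lam i)%:Z - j%:Z)).
  by rewrite lerD2r lez_nat.
by rewrite ltrD2l ltrN2 ltz_nat.
Qed.

Lemma beta_inj lam : is_part lam -> forall i j, betar 0 lam i = betar 0 lam j -> i = j.
Proof.
move=> hp i j h; case: (ltngtP i j) => // hij.
  by have := beta_strict hp hij; rewrite h ltxx.
by have := beta_strict hp hij; rewrite h ltxx.
Qed.

Fixpoint mk (N : nat) (f : nat -> nat) : seq nat :=
  match N with
  | 0 => [::]
  | N'.+1 => if f 0%N == 0%N then [::] else f 0%N :: mk N' (fun i => f i.+1)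
  end.

Lemma decr_le (f : nat -> nat) : (forall i, f i.+1 <= f i)%N ->
  forall i j, (i <= j)%N -> (f j <= f i)%N.
Proof.
move=> hf i j hij; rewrite -(subnK hij); elim: (j - i)%N => [|k IH] //.
by rewrite addSn (leq_trans (hf _)).
Qed.

Lemma mk_nth N f : (forall i, f i.+1 <= f i)%N -> f N = 0%N ->
  forall k, nth 0%N (mk N f) k = f k.
Proof.
elim: N f => [|N IH] f hf hN k /=.
  by rewrite nth_nil; apply/esym/eqP; rewrite -leqn0 -hN decr_le.
case: ifP => h0.
  by rewrite nth_nil; apply/esym/eqP; rewrite -leqn0 -(eqP h0) decr_le.
case: k => [|k] //=.
by rewrite IH.
Qed.

Lemma mk_path N f x : (forall i, f i.+1 <= f i)%N -> (f 0%N <= x)%N ->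
  path geqr x (mk N f).
Proof.
elim: N f x => [|N IH] f x hf hx //=.
case: ifP => // _ /=; apply/andP; split; first exact: hx.
by apply: IH => // i; apply: hf.
Qed.

Lemma mk_part N f : (forall i, f i.+1 <= f i)%N -> is_part (mk N f).
Proof.
move=> hf; apply/andP; split.
  by apply: (path_sorted (x := f 0%N)); apply: mk_path.
elim: N f hf => [|N IH] f hf //=.
case: ifP => // h0; rewrite inE negb_or eq_sym h0 /=.
by apply: IH => i; apply: hf.
Qed.
Lemma res_of_dvd m (y : int) (j : 'I_m.+1) :
  (m.+1%:Z %| y - j%:Z)%Z -> res m y = j.
Proof.
move=> h; apply: ord_inj; apply/eqP; rewrite -eqz_nat res_val.
have : (y == j%:Z %[mod m.+1%:Z])%Z by rewrite eqz_mod_dvd.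
move=> /eqP ->; rewrite modz_small //.
by rewrite lez_nat ltz_nat /= ltn_ord.
Qed.

Lemma dvd_res m (y : int) : (m.+1%:Z %| y - (res m y : nat)%:Z)%Z.
Proof.
rewrite res_val {1}(divz_eq y m.+1%:Z) addrK.
by apply: dvdz_mull; apply: dvdzz.
Qed.

Lemma predz (n : nat) : (0 < n)%N -> (n.-1)%:Z = n%:Z - 1.
Proof. by case: n => // n _ /=; rewrite -[n.+1]addn1 PoszD addrK. Qed.

Lemma ltz_sub1 (y : int) : y - 1 < y.
Proof. by rewrite ltrBlDr ltrDl. Qed.

Lemma stepA m (e : 'I_m.+1 -> rat) lam mu : is_part lam ->
  J_step [pred j | e j == 0] lam mu -> move e (Bp lam) (Bp mu).
Proof.
move=> hl [hmu [a [b [hin [hc hY]]]]].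
move: hin => /and3P [ha hb hbf].
set f := nth 0%N lam in hbf *; set g := nth 0%N mu.
set a0 := a.-1.
have ea : a = a0.+1 by rewrite /a0 prednK.
rewrite ea in hY hbf hc; rewrite /= in hbf.
have claim1 : forall k, k != a0 -> g k = f k.
  move=> k hk.
  have H : forall b', (0 < b')%N -> (b' <= g k)%N <-> (b' <= f k)%N.
    move=> b' hb'; have := hY k.+1 b'; rewrite /inY /= hb' /= => hh; split.
      by move/hh => [].
    move=> h; apply/hh; split=> // -[e1 _]; by rewrite e1 eqxx in hk.
  apply/eqP; rewrite eqn_leq; apply/andP; split.
    by case: (posnP (g k)) => [->//|hp]; apply/(H _ hp).
  by case: (posnP (f k)) => [->//|hp]; apply/(H _ hp).
have H : forall b', (0 < b')%N -> (b' <= g a0)%N <-> ((b' <= f a0)%N /\ b' <> b).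
  move=> b' hb'; have := hY a0.+1 b'; rewrite /inY /= hb' /= => hh; split.
    by move/hh => [h1 h2]; split=> // eb; apply: h2; rewrite eb.
  move=> [h1 h2]; apply/hh; split=> // -[eb]; by apply: h2.
have gb : (g a0 < b)%N.
  rewrite ltnNge; apply/negP => /(H _ hb) [_]; by apply.
have bf : b = f a0.
  apply/eqP; rewrite eqn_leq hbf /=; rewrite leqNgt; apply/negP => hlt.
  have hf0 : (0 < f a0)%N by apply: leq_ltn_trans hlt.
  have : (f a0 <= g a0)%N.
    apply/(H _ hf0); split=> // eb; by rewrite eb ltnn in hlt.
  move=> hfg; have := leq_ltn_trans hfg gb; by rewrite ltnNge (ltnW hlt).
have hf0 : (0 < f a0)%N by rewrite -bf.
have ga : g a0 = (f a0).-1.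
  apply/eqP; rewrite eqn_leq; apply/andP; split.
    by rewrite -ltnS prednK // -bf.
  case: (posnP (f a0).-1) => [->//|hp]; apply/(H _ hp); split.
    exact: leq_pred.
  by rewrite bf => hh; move: (ltn_predL (f a0)); rewrite hf0 hh ltnn.
have hmu' := part_decr hmu; have hl' := part_decr hl.
set x := (f a0)%:Z - a0%:Z.
have bx : betar 0 lam a0 = x by rewrite betar0.
exists x; split; first by exists a0.
split.
  move=> [k hk].
  case: (leqP k a0) => hka.
    have : x <= betar 0 lam k.
      rewrite -bx; case: (ltngtP k a0) hka => // [hh|->] _; last by [].
      by apply: ltW; apply: beta_strict.
    rewrite hk => hh; have := le_lt_trans hh (ltz_sub1 x); by rewrite ltxx.
  have h1 : betar 0 lam k <= betar 0 lam a0.+1.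
    case: (ltngtP a0.+1 k) hka => // [hh|<-] _; last by [].
    by apply: ltW; apply: beta_strict.
  have h2 : betar 0 lam a0.+1 < x - 1.
    rewrite betar0 -/f -claim1; last by rewrite neq_ltn ltnSn orbT.
    have hg : (g a0.+1 <= g a0)%N by apply: hmu'.
    rewrite ga in hg.
    apply: (le_lt_trans (y := ((f a0).-1)%:Z - a0.+1%:Z)).
      by rewrite lerD2r lez_nat.
    by rewrite predz // /x addrAC ltrD2r ltrD2l ltrN2 ltz_nat ltnSn.
  have := le_lt_trans h1 h2; by rewrite hk ltxx.
split.
  case: hc => j [hj hdiv].
  have -> : x - 1 = b%:Z - a0.+1%:Z.
    by rewrite bf /x -[a0.+1]addn1 PoszD opprD addrA.
  by move: hj; rewrite inE => /eqP hj; rewrite (res_of_dvd hdiv).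
move=> z; split.
  move=> [k hk]; case: (eqVneq k a0) => hka.
    right; rewrite -hk betar0 hka -/g ga predz // /x.
    by rewrite addrAC.
  left; split.
    by exists k; rewrite -hk !betar0 -/f -/g claim1.
  move=> hzx; apply: (negP hka); apply/eqP; apply: (beta_inj hl).
  by rewrite bx -hzx -hk !betar0 -/f -/g claim1.
case=> [[[k hk] hne]|->].
  exists k; rewrite -hk !betar0 -/f -/g claim1 //.
  by apply/eqP => hka; apply: hne; rewrite -hk hka.
exists a0; rewrite betar0 -/g ga predz // /x.
by rewrite addrAC.
Qed.
Lemma stepB m (e : 'I_m.+1 -> rat) mu x : is_part mu -> Bp mu x ->
  ~ Bp mu (x - 1) -> e (res m (x - 1)) = 0 ->
  exists nu, J_step [pred j | e j == 0] mu nu.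
Proof.
move=> hmu [k hk] hn he.
set g := nth 0%N mu.
have hdec := part_decr hmu.
have hlt : (g k.+1 < g k)%N.
  rewrite ltn_neqAle hdec // andbT; apply/negP => /eqP hh.
  apply: hn; exists k.+1; rewrite betar0 -/g hh -hk betar0 -/g.
  by rewrite -[k.+1]addn1 PoszD opprD addrA.
have hk0 : (0 < g k)%N by apply: leq_ltn_trans hlt.
have hks : (k < size mu)%N by rewrite -part_nth0.
pose h i := if i == k then (g k).-1 else g i.
have hdh : forall i, (h i.+1 <= h i)%N.
  move=> i; rewrite /h; case: (eqVneq i.+1 k) => [e1|n1].
    rewrite -e1 (ltn_eqF (ltnSn i)).
    by apply: leq_trans (leq_pred _) (hdec _ _ (leqnSn _)).
  case: (eqVneq i k) => [->|n2].
    by rewrite -ltnS prednK.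
  by apply: hdec.
have hN : h (size mu) = 0%N.
  by rewrite /h (gtn_eqF hks) /g nth_default.
exists (mk (size mu) h); split; first exact: mk_part.
exists k.+1, (g k); split.
  by rewrite /inY /= hk0 leqnn.
split.
  exists (res m (x - 1)); split; first by rewrite inE he.
  have -> : (g k)%:Z - k.+1%:Z = x - 1.
    by rewrite -hk betar0 -/g -[k.+1]addn1 PoszD opprD addrA.
  exact: dvd_res.
move=> a' b'; rewrite /inY (mk_nth hdh hN).
case: a' => [|a'] /=; first by split=> //; case.
rewrite /h; case: (eqVneq a' k) => [->|ne].
  split.
    move=> /andP [hb hbk]; split.
      by rewrite hb /= (leq_trans hbk (leq_pred _)).
    by case=> hh; move: hbk; rewrite hh -ltnS prednK // ltnn.
  case=> /andP [hb hbk] hne; rewrite hb /=.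
  by rewrite -ltnS prednK // ltn_neqAle hbk andbT; apply/eqP => hh; apply: hne; rewrite hh.
split=> [hh|[]] //; split=> // -[hh']; by rewrite hh' eqxx in ne.
Qed.
Fixpoint down (P : int -> Prop) (n : nat) (z : int) : int :=
  match n with
  | 0 => z - 1
  | n'.+1 => if bP (P (z - 1)) then z - 1 else down P n' (z - 1)
  end.

Lemma ltz_le1 (a b : int) : a < b -> a <= b - 1.
Proof. by move=> h; rewrite lerBrDr lezD1. Qed.

Lemma down_spec (P : int -> Prop) (L : int) : (forall x, x <= L -> P x) ->
  forall n z, z - 1 - n%:Z <= L ->
  [/\ P (down P n z), down P n z < z &
      forall w, down P n z < w -> w < z -> ~ P w].
Proof.
move=> hL; elim=> [|n IH] z hz /=.
  rewrite subr0 in hz; split; first exact: hL.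
    exact: ltz_sub1.
  move=> w h1 h2; have := ltz_le1 h2; rewrite leNgt h1 //.
case: (bPP (P (z - 1))) => hp.
  split=> //; first exact: ltz_sub1.
  move=> w h1 h2; have := ltz_le1 h2; rewrite leNgt h1 //.
have hz' : z - 1 - 1 - n%:Z <= L.
  by move: hz; rewrite -[n.+1]addn1 PoszD opprD addrA addrAC.
have [h1 h2 h3] := IH _ hz'; split=> //.
  exact: lt_trans h2 (ltz_sub1 z).
move=> w hw1 hw2; have := ltz_le1 hw2; rewrite le_eqVlt => /orP [/eqP ->//|hw].
exact: h3.
Qed.

Definition nx (P : int -> Prop) (L z : int) := down P `|z - L|%N z.

Lemma nx_spec (P : int -> Prop) (L : int) : (forall x, x <= L -> P x) ->
  forall z, [/\ P (nx P L z), nx P L z < z &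
      forall w, nx P L z < w -> w < z -> ~ P w].
Proof.
move=> hL z; apply: (down_spec hL).
have : z - L <= `|z - L|%N%:Z by rewrite abszE ler_norm.
move=> h; apply: (le_trans (y := z - `|z - L|%N%:Z)).
  by rewrite addrAC gerBl.
by rewrite lerBlDr [L + _]addrC -lerBlDr.
Qed.

Fixpoint enumf (P : int -> Prop) (L U : int) (k : nat) : int :=
  match k with
  | 0 => nx P L (U + 1)
  | k'.+1 => nx P L (enumf P L U k')
  end.

Lemma enum_ok (P : int -> Prop) (L U : int) :
  (forall x, x <= L -> P x) -> (forall x, P x -> x <= U) ->
  strictly_decr (enumf P L U) /\ forall x, memZ (enumf P L U) x <-> P x.
Proof.
move=> hL hU; split.
  by move=> k /=; case: (nx_spec hL (enumf P L U k)).
have hP : forall k, P (enumf P L U k).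
  by case=> [|k] /=; [case: (nx_spec hL (U + 1))|case: (nx_spec hL (enumf P L U k))].
move=> x; split; first by move=> [k <-].
move=> px.
have h0 : x <= enumf P L U 0.
  rewrite leNgt; apply/negP => hlt.
  case: (nx_spec hL (U + 1)) => _ _ h; apply: (h x) => //.
  by rewrite ltzD1 hU.
suff : forall n k, x <= enumf P L U k -> enumf P L U k - x <= n%:Z ->
  exists k', enumf P L U k' = x.
  move=> /(_ `|enumf P L U 0 - x|%N 0%N h0); apply.
  by rewrite abszE ler_norm.
elim=> [|n IH] k hk hn.
  exists k; apply/eqP; rewrite eq_le hk andbT.
  by rewrite -subr_le0.
case: (eqVneq (enumf P L U k) x) => [e1|ne]; first by exists k.
have hlt : x < enumf P L U k by rewrite lt_neqAle eq_sym ne hk.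
have hk1 : x <= enumf P L U k.+1.
  rewrite leNgt; apply/negP => hh.
  case: (nx_spec hL (enumf P L U k)) => _ _ h; exact: (h x hh hlt px).
apply: (IH k.+1) => //.
have : enumf P L U k.+1 < enumf P L U k by case: (nx_spec hL (enumf P L U k)).
move=> hs; have := ltrBlDr; move=> _.
have h2 : enumf P L U k.+1 - x < enumf P L U k - x by rewrite ltrD2r.
have := lt_le_trans h2 hn; rewrite -[n.+1]addn1 PoszD => hh.
by rewrite -ltzD1.
Qed.
Definition bnd (X : int -> Prop) (U L : int) :=
  (forall x, X x -> x <= U) /\ (forall x, x <= L -> X x).

Definition mea (X : int -> Prop) (U L : int) : nat :=
  (\sum_(i < `|U - L|%N) bP (X (L + 1 + i%:Z)%R) * i)%N.

Lemma sum_split2 N (F : 'I_N -> nat) (a b : 'I_N) : a != b ->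
  (\sum_i F i = F a + (F b + \sum_(i | (i != a) && (i != b)) F i))%N.
Proof.
move=> hab; rewrite (bigD1 a) //; congr (_ + _)%N.
by rewrite (bigD1 b) //= eq_sym.
Qed.

Lemma mea_move (X X' : int -> Prop) U L x : bnd X U L -> X x -> ~ X (x - 1) ->
  (forall z, X' z <-> (X z /\ z <> x) \/ z = x - 1) ->
  (mea X' U L).+1 = mea X U L.
Proof.
move=> [hU hL] hx hnx hX'.
have hxL : L < x - 1 by rewrite ltNge; apply/negP => /hL.
have hxU := hU _ hx.
have h0 : 0 <= x - (L + 1).
  by rewrite subr_ge0; rewrite ltrBrDr in hxL; apply: ltW.
set a := absz (x - (L + 1))%R.
have ea : x = L + 1 + a%:Z by rewrite /a gez0_abs // addrC subrK.
have a1 : (0 < a)%N.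
  by rewrite -ltz_nat; move: hxL; rewrite ea addrAC addrK ltrDl.
have aN : (a < `|U - L|%N)%N.
  rewrite -ltz_nat gez0_abs; last first.
    by rewrite subr_ge0; apply: (le_trans (ltW (lt_trans hxL (ltz_sub1 x)))).
  rewrite ltrBrDl; apply: lt_le_trans hxU; by rewrite ea addrAC ltrDl.
have ea1 : x - 1 = L + 1 + (a.-1)%:Z by rewrite predz // ea addrA.
have aN' : (a.-1 < `|U - L|%N)%N by apply: leq_ltn_trans aN; apply: leq_pred.
have hne : Ordinal aN != Ordinal aN'.
  by rewrite -val_eqE /= neq_ltn ltn_predL a1 orbT.
have hidx : forall i : nat, (L + 1 + i%:Z == x) = (i == a).
  by move=> i; rewrite ea (inj_eq (addrI _)) eqz_nat.
have hidx1 : forall i : nat, (L + 1 + i%:Z == x - 1) = (i == a.-1).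
  by move=> i; rewrite ea1 (inj_eq (addrI _)) eqz_nat.
rewrite /mea !(sum_split2 _ hne) /=.
have -> : bP (X' (L + 1 + a%:Z)) = false.
  apply/bPP; rewrite hX' -ea; case=> [[_ []]|] //.
  by move=> hh; have := ltz_sub1 x; rewrite -hh ltxx.
have -> : bP (X' (L + 1 + (a.-1)%:Z)) = true by apply/bPP; rewrite hX' -ea1; right.
have -> : bP (X (L + 1 + a%:Z)) = true by apply/bPP; rewrite -ea.
have -> : bP (X (L + 1 + (a.-1)%:Z)) = false by apply/bPP; rewrite -ea1.
rewrite /= mul0n mul1n mul1n add0n addnA -[in RHS]addnA add0n.
rewrite -addSn prednK //; congr (_ + _)%N.
apply: eq_bigr => i /andP [h1 h2].
congr (_ * _)%N; congr (nat_of_bool _); apply: bP_iff; rewrite hX'; split.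
  by case=> [[]|hh] //; move: h2; rewrite -val_eqE /= -hidx1 hh eqxx.
move=> hh; left; split=> // hh'; move: h1; rewrite -val_eqE /= -hidx hh' eqxx //.
Qed.

Lemma sort_exists m d (e : 'I_m.+1 -> rat) X U L : good d e -> bnd X U L ->
  exists Y, [/\ bnd Y U L, term e Y &
    forall k y, MS d e (runners Y) k y = MS d e (runners X) k y].
Proof.
move=> g; move: {2}(mea X U L) (leqnn (mea X U L)) => n.
elim: n X => [|n IH] X hn hb.
- exists X; split=> //.
  move=> [x [hx [hnx he]]].
  pose X' z := (X z /\ z <> x) \/ z = x - 1.
  have := mea_move hb hx hnx (X' := X') (fun z => conj id id).
  by move=> hh; rewrite -hh in hn.
- case: (excluded_middle_informative (term e X)) => ht.
    by exists X.
  have [x [hx [hnx he]]] : exists x, X x /\ ~ X (x - 1) /\ e (res m (x - 1)) = 0.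
    by apply: NNPP.
  pose X' z := (X z /\ z <> x) \/ z = x - 1.
  have hm := mea_move hb hx hnx (X' := X') (fun z => conj id id).
  have hmv : move e X X' by exists x; do 3 split=> //.
  have hb' : bnd X' U L.
    case: hb => hU hL; split.
      move=> z [[hz _]|->]; first exact: hU.
      by apply: le_trans (ltW (ltz_sub1 x)) (hU _ hx).
    move=> z hz; left; split; first exact: hL.
    move=> hzx; apply: hnx; apply: hL; rewrite -hzx.
    by apply: le_trans (ltW (ltz_sub1 z)) hz.
  have hn' : (mea X' U L <= n)%N by rewrite -ltnS hm.
  have [Y [h1 h2 h3]] := IH X' hn' hb'.
  exists Y; split=> // k y; rewrite h3; exact: MS_move.
Qed.
Lemma chi_enc m (C : 'I_m.+1 -> nat -> int) x :
  chi C x <-> exists q c, memZ (C q) c /\ x = enc q c.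
Proof.
split.
  by move=> [q [k ->]]; exists q, (C q k); split=> //; exists k.
by move=> [q [c [[k <-] ->]]]; exists q, k.
Qed.

Lemma runners_chi m (C : 'I_m.+1 -> nat -> int) p c :
  runners (chi C) p c <-> memZ (C p) c.
Proof.
rewrite /runners chi_enc; split; last by move=> h; exists p, c.
by move=> [q [c' [h /enc_inj [-> ->]]]].
Qed.

Lemma set_of_runners m (X : int -> Prop) (S : 'I_m.+1 -> int -> Prop) :
  (forall q c, X (enc q c) <-> S q c) ->
  forall x, X x <-> exists q c, S q c /\ x = enc q c.
Proof.
move=> h x; split.
  move=> hx; exists (res m (x - 1)), (((x - 1) %/ m.+1%:Z)%Z + 1).
  by rewrite -h -enc_surj.
by move=> [q [c [hs ->]]]; apply/h.
Qed.

Lemma enc_le m (q : 'I_m.+1) c : enc q c <= m.+1%:Z * c.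
Proof.
rewrite /enc -addrA mulrBr mulr1 -addrA gerDl addrC subr_le0.
have : (q : nat).+1%:Z <= m.+1%:Z by rewrite lez_nat ltn_ord.
by rewrite -[(q : nat).+1]addn1 PoszD.
Qed.

Lemma L_up m (X : int -> Prop) V : (forall (q : 'I_m.+1) c, X (enc q c) -> c <= V) ->
  forall x, X x -> x <= m.+1%:Z * V.
Proof.
move=> h x hx; rewrite (enc_surj m x) in hx *.
apply: le_trans (enc_le _ _) _; rewrite ler_pM2l //; exact: h hx.
Qed.

Lemma L_lo m (X : int -> Prop) W : (forall (q : 'I_m.+1) c, c <= W -> X (enc q c)) ->
  forall x, x <= m.+1%:Z * W -> X x.
Proof.
move=> h x hx; rewrite (enc_surj m x); apply: h.
set q := ((x - 1) %/ m.+1%:Z)%Z.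
suff : q < W by rewrite lezD1.
rewrite -(ltr_pM2r (x := m.+1%:Z)) //.
apply: (le_lt_trans (y := x - 1)).
  by rewrite [leRHS](divz_eq (x - 1) m.+1%:Z) lerDl modz_ge0.
by apply: lt_le_trans (ltz_sub1 x) _; rewrite mulrC.
Qed.

Lemma runners_up m (X : int -> Prop) U (p : 'I_m.+1) :
  (forall x, X x -> x <= U) -> forall c, runners X p c -> c <= `|U|%:Z.
Proof.
move=> hU c hc; have hu := hU _ hc.
case: (lerP c 0) => hc0.
  by apply: le_trans hc0 _.
apply: (le_trans (y := enc p c)); last by apply: le_trans hu _; rewrite abszE ler_norm.
rewrite /enc; have h1 : c - 1 <= m.+1%:Z * (c - 1).
  by apply: ler_peMl; [rewrite subr_ge0 -ltzD1 ltzD1 |rewrite lez_nat].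
rewrite -addrA; apply: (le_trans (y := m.+1%:Z * (c - 1) + 1)).
  by apply: le_trans (lerD h1 (lexx 1)); rewrite subrK.
by rewrite lerD2l lerDr.
Qed.

Lemma runners_lo m (X : int -> Prop) L (p : 'I_m.+1) :
  (forall x, x <= L -> X x) -> forall c, c <= - `|L|%:Z -> runners X p c.
Proof.
move=> hL c hc; apply: hL.
have hc0 : c <= 0 by apply: le_trans hc _; rewrite oppr_le0.
apply: le_trans (enc_le p c) _.
apply: le_trans (ler_neMl hc0 _) _; first by rewrite lez_nat.
apply: le_trans hc _; rewrite lerNl abszE; by rewrite -normrN ler_norm.
Qed.

Lemma MS_ext m d (e : 'I_m.+1 -> rat) S S' : (forall p c, S p c <-> S' p c) ->
  forall k y, MS d e S k y = MS d e S' k y.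
Proof.
move=> h k y; apply: eq_bigr => p _; congr (nat_of_bool _); apply: bP_iff.
exact: h.
Qed.

Lemma betar_up r lam k : is_part lam -> betar r lam k <= (nth 0%N lam 0%N)%:Z + r.
Proof.
move=> hp; rewrite /betar; apply: (le_trans (y := (nth 0%N lam k)%:Z + r)).
  by rewrite gerBl.
by rewrite lerD2r lez_nat part_decr.
Qed.

Lemma betar_lo r lam c : c <= r - (size lam)%:Z -> memZ (betar r lam) c.
Proof.
move=> hc; have h0 : 0 <= r - c by rewrite subr_ge0; apply: le_trans hc _; rewrite gerBl.
exists `|r - c|%N; rewrite /betar gez0_abs // nth_default; last first.
  by rewrite -lez_nat gez0_abs // lerBrDr addrC -lerBrDr.
by rewrite add0r opprB addrC subrK.
Qed.
Lemma nestG_spec m d (e : 'I_m.+1 -> rat) (S : 'I_m.+1 -> int -> Prop) : good d e ->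
  ((forall p : 'I_m.+1, (p != 0 :> nat) -> e p = 0 -> forall x, S p x -> S (ord_pred p) x) /\
   (forall p0 q : 'I_m.+1, (p0 == 0 :> nat) -> (q == m :> nat) -> mpart d e p0 = 0 ->
      forall x, S p0 (x + 1) -> S q x))
  <-> (forall p y, e p = 0 -> GS d e S p y -> GS d e S (ord_pred p) y).
Proof.
move=> g; split.
  move=> [h1 h2] p y ep; rewrite /GS.
  case: (boolP (p == 0 :> nat)) => hp.
    have [-> ->] := sh_zero g ep hp; rewrite addr0 => hs.
    apply: (h2 p) => //; first by rewrite ord_pred_val hp.
    by rewrite (mpart_zero d e hp) ep mulr0.
  by rewrite (sh_pred d ep hp); apply: h1.
move=> h; split.
  move=> p hp ep x hx.
  have := h p (x - sh d e p) ep; rewrite /GS subrK (sh_pred d ep hp) subrK.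
  by apply.
move=> p0 q hp0 hq hm x hx.
have ep : e p0 = 0.
  move: hm; rewrite (mpart_zero d e hp0) => /eqP; rewrite mulf_eq0 (negbTE (d_neq0 g)).
  by move=> /eqP.
have -> : q = ord_pred p0 by apply: ord_inj; rewrite ord_pred_val hp0 (eqP hq).
have [h1 h2] := sh_zero g ep hp0.
have := h p0 x ep; rewrite /GS h1 h2 addr0; by apply.
Qed.

Lemma le_sum_int n (F : 'I_n -> int) q : (forall i, 0 <= F i) -> F q <= \sum_i F i.
Proof.
move=> h; rewrite (bigD1 q) //= lerDl sumr_ge0 // => i _; exact: h.
Qed.

Lemma chi_bnd m (r : 'I_m.+1 -> int) ws (lam : 'I_m.+1 -> seq nat) :
  (forall p, is_part (lam p)) ->
  exists U L, bnd (chi (Cseq r ws lam)) U L.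
Proof.
move=> hlam.
pose V := \sum_(p : 'I_m.+1) ((nth 0%N (lam (word_inv ws p)) 0%N)%:Z + `|r p|%:Z).
pose W := - \sum_(p : 'I_m.+1) ((size (lam (word_inv ws p)))%:Z + `|r p|%:Z).
exists (m.+1%:Z * V), (m.+1%:Z * W); split.
  apply: L_up => q c /runners_chi [k <-].
  apply: le_trans (betar_up _ _ (hlam _)) _.
  apply: (le_trans (y := (nth 0%N (lam (word_inv ws q)) 0%N)%:Z + `|r q|%:Z)).
    by rewrite lerD2l abszE ler_norm.
  by apply: (le_sum_int (F := fun p => _)) => i; rewrite addr_ge0.
apply: L_lo => q c hc; apply/runners_chi; apply: betar_lo.
apply: le_trans hc _.
have hh := le_sum_int (F := fun p : 'I_m.+1 => (size (lam (word_inv ws p)))%:Z + `|r p|%:Z) q.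
have {}hh : (size (lam (word_inv ws q)))%:Z + `|r q|%:Z <=
   \sum_(p : 'I_m.+1) ((size (lam (word_inv ws p)))%:Z + `|r p|%:Z).
  by apply: hh => i; rewrite addr_ge0.
rewrite /W lerNl; apply: le_trans _ hh; rewrite opprB lerD2l.
by rewrite abszE -normrN ler_norm.
Qed.
Lemma main_m (m : nat) (H : 'I_m.+1 -> rat) (hH0 : \sum_(i : 'I_m.+1) H i = 0)
  (d : nat) (hd : (0 < d)%N)
  (hdH : forall i : 'I_m.+1, (i != 0 :> nat) -> exists z : int, d%:R * H i = z%:~R)
  (r : 'I_m.+1 -> int) (hr : \sum_(i : 'I_m.+1) r i = 0)
  (ws : seq 'I_m.+1)
  (heps : forall j : 'I_m.+1, 0 <= eps H r ws j <= 1)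
  (lam : 'I_m.+1 -> seq nat) (hlam : forall p, is_part (lam p)) :
  let e := eps H r ws in
  let J := [pred j : 'I_m.+1 | e j == 0] in
  (exists Ct, Ctilde_spec d e (Cseq r ws lam) Ct) /\
  (forall Ct : 'I_m.+1 -> nat -> int, Ctilde_spec d e (Cseq r ws lam) Ct ->
   forall nu : seq nat, is_part nu ->
   (forall x, beta_set (\sum_(i : 'I_m.+1) r i) nu x <-> chi (Cseq r ws lam) x) ->
   forall mu : seq nat, is_J_heart J nu mu ->
   forall x, beta_set 0 mu x <-> chi Ct x).
Proof.
move=> e J.
have g : good d e.
  split=> //.
  - by move=> j; case/andP: (heps j).
  - exact: sum_eps.
  - exact: int_eps.
set C := Cseq r ws lam.
have MSC : forall Ct, Ctilde_spec d e C Ct -> forall p y,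
    MS d e (fun p z => memZ (Ct p) z) (key d e p) y =
    MS d e (runners (chi C)) (key d e p) y.
  move=> Ct [_ [hm _]] p y; rewrite (MS_of_multC (C2 := C) g hm).
  by apply: MS_ext => q c; rewrite runners_chi.
split.
  have [U [L hb]] := chi_bnd r ws hlam.
  have [Y [hbY htY hMY]] := sort_exists g hb.
  case: hbY => hUY hLY.
  pose Ct (p : 'I_m.+1) := enumf (runners Y p) (- `|L|%:Z) `|U|%:Z.
  have hCt : forall p, strictly_decr (Ct p) /\ forall x, memZ (Ct p) x <-> runners Y p x.
    move=> p; apply: enum_ok; [exact: runners_lo | exact: runners_up].
  exists Ct; split; first by move=> q; case: (hCt q).
  split.
    move=> t ht x; rewrite !multC_MS //.
    set k := (if t == 0%N then d else t)%:R.
    have E1 : forall k y, MS d e (fun p z => memZ (Ct p) z) k y = MS d e (runners Y) k y.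
      by apply: MS_ext => p c; case: (hCt p).
    rewrite E1 hMY; apply: MS_ext => p c; exact: runners_chi.
  apply/(nestG_spec (fun p z => memZ (Ct p) z) g) => p y ep.
  rewrite /GS; case: (hCt p) => _ ->; case: (hCt (ord_pred p)) => _ ->.
  exact: (term_G g htY).
move=> Ct hspec nu hnu hB mu [hrt hterm].
rewrite hr in hB.
have hchain : forall lam0, is_part lam0 ->
    clos_refl_trans_1n (seq nat) (J_step J) lam0 mu ->
    is_part mu /\ forall k y, MS d e (runners (Bp mu)) k y = MS d e (runners (Bp lam0)) k y.
  move=> lam0 hp0 h; elim: h hp0 => [x|x y z hxy _ IH] hpx; first by [].
  have hpy : is_part y by case: hxy.
  have [hpm IHm] := IH hpy; split=> // k yy.
  rewrite IHm; apply: MS_move => //; exact: stepA.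
have [hpmu hMS] := hchain nu hnu (clos_rt_rt1n _ _ _ _ hrt).
have htmu : term e (Bp mu).
  move=> [x [hx [hnx he]]]; apply: hterm.
  exact: stepB hpmu hx hnx he.
have hnuC : forall k y, MS d e (runners (Bp nu)) k y = MS d e (runners (chi C)) k y.
  by move=> k y; apply: MS_ext => p c; rewrite /runners; exact: hB.
have hAB := uniq_G (A := GS d e (runners (Bp mu))) (B := GS d e (fun p z => memZ (Ct p) z)) g
  (term_G g htmu)
  (proj1 (nestG_spec (fun p z => memZ (Ct p) z) g) (proj2 (proj2 hspec)))
  (fun p y => etrans (etrans (hMS _ _) (hnuC _ _)) (esym (MSC Ct hspec p y))).
move=> x; rewrite chi_enc.
change (Bp mu x <-> (exists q c, memZ (Ct q) c /\ x = enc q c)).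
apply: set_of_runners => q c.
have := hAB q (c - sh d e q); rewrite /GS /runners subrK; done.
Qed.
Theorem theorem3p11
  (l n : nat) (hl : (0 < l)%N) (hn : (0 < n)%N)
  (H : 'I_l -> rat) (hH0 : \sum_(i : 'I_l) H i = 0)
  (d : nat) (hd : (0 < d)%N)
  (hdH : forall i : 'I_l, (i != 0 :> nat) -> exists z : int, d%:R * H i = z%:~R)
  (r : 'I_l -> int) (hr : \sum_(i : 'I_l) r i = 0)
  (ws : seq 'I_l) (hws : all (fun i : 'I_l => (0 < i)%N) ws)
  (heps : forall j : 'I_l, 0 <= eps H r ws j <= 1)
  (lam : 'I_l -> seq nat) (hlam : forall p, is_part (lam p))
  (hlamn : (\sum_(p : 'I_l) sumn (lam p))%N = n) :
  let e := eps H r ws in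
  let J := [pred j : 'I_l | e j == 0] in
  (exists Ct, Ctilde_spec d e (Cseq r ws lam) Ct) /\
  (forall Ct : 'I_l -> nat -> int, Ctilde_spec d e (Cseq r ws lam) Ct ->
   forall nu : seq nat, is_part nu ->
   (forall x, beta_set (\sum_(i : 'I_l) r i) nu x <-> chi (Cseq r ws lam) x) ->
   forall mu : seq nat, is_J_heart J nu mu ->
   forall x, beta_set 0 mu x <-> chi Ct x).
Proof.
case: l hl H hH0 hdH r hr ws hws heps lam hlam hlamn => [//|m] _ H hH0 hdH r hr ws _ heps lam hlam _.
exact: main_m.
Qed.
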